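(* For every closed loop $c(\widehat{\mathbf{v}})$ moving with the velocity $\widehat{\mathbf{v}}$ of the WCIFS system below, the Kelvin circulation relation holds: $$\frac{d}{dt}\oint_{c(\widehat{\mathbf{v}})}\Big(\widehat{\mathbf{v}}\cdot d\mathbf{x}+\frac{\widetilde{\mu}}{D\rho}\,d\zeta\Big)=\oint_{c(\widehat{\mathbf{v}})}d\varpi-\frac1\rho\,dp.$$
   Context: On a free surface $z=\zeta(\mathbf{x},t)$ over horizontal coordinates $\mathbf{x}=(x,y)$, the wave-current interaction on a free surface (WCIFS) equations, derived from Hamilton's principle, govern the horizontal velocity $\widehat{\mathbf{v}}$, areal density $D$ (constrained to $D=1$ by the non-hydrostatic pressure $p$, so $\mathrm{div}\,\widehat{\mathbf{v}}=0$), buoyancy $\rho$, elevation $\zeta$ and vertical velocity $\widehat{w}$, with gravity $g$ and constant $\epsilon$: $(\partial_t+\mathcal{L}_{\widehat{\mathbf{v}}})(\widehat{\mathbf{v}}\cdot d\mathbf{x}+\widetilde{w}\,d\zeta)=d\varpi-\frac1\rho dp$; $\partial_tD+\mathrm{div}(D\widehat{\mathbf{v}})=0$; $\partial_t\rho+\widehat{\mathbf{v}}\cdot\nabla\rho=0$; $\partial_t\zeta+\widehat{\mathbf{v}}\cdot\nabla\zeta=\widehat{w}(1+\epsilon|\nabla\zeta|^2)$; $\partial_t\widetilde{w}+\widehat{\mathbf{v}}\cdot\nabla\widetilde{w}=-g+\frac{2\epsilon}{D\rho}\mathrm{div}(\widehat{w}\,\widetilde{\mu}\,\nabla\zeta)$,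 where $\varpi=\tfrac12(|\widehat{\mathbf{v}}|^2+\widehat{w}^2)-g\zeta$ and $\widetilde{\mu}=D\rho\widehat{w}/(1+\epsilon|\nabla\zeta|^2)=D\rho\widetilde{w}$. $\mathcal{L}_{\widehat{\mathbf{v}}}$ is the Lie derivative along $\widehat{\mathbf{v}}$. *)

(* Defs.v *)
From Stdlib Require Import Reals.
From Coquelicot Require Import Coquelicot.
Open Scope R_scope.

(* A scalar field on the free surface, as a function of time t and horizontal
   position (x, y). *)
Definition Fld := R -> R -> R -> R.

Definition pt (f : Fld) : Fld := fun t x y => Derive (fun t' => f t' x y) t.
Definition px (f : Fld) : Fld := fun t x y => Derive (fun x' => f t x' y) x.
Definition py (f : Fld) : Fld := fun t x y => Derive (fun y' => f t x y') y.

Definition cont3 (f : Fld) : Prop :=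
  forall q : R * R * R,
    continuous (fun q : R * R * R => f (fst (fst q)) (snd (fst q)) (snd q)) q.

Fixpoint Ck3 (k : nat) (f : Fld) : Prop :=
  match k with
  | O => cont3 f
  | S k' => cont3 f /\
      (forall t x y, ex_derive (fun t' => f t' x y) t /\
                     ex_derive (fun x' => f t x' y) x /\
                     ex_derive (fun y' => f t x y') y) /\
      Ck3 k' (pt f) /\ Ck3 k' (px f) /\ Ck3 k' (py f)
  end.

Definition cont2 (f : R -> R -> R) : Prop :=
  forall q : R * R, continuous (fun q : R * R => f (fst q) (snd q)) q.

Fixpoint Ck2 (k : nat) (f : R -> R -> R) : Prop :=
  match k with
  | O => cont2 f
  | S k' => cont2 f /\
      (forall t s, ex_derive (fun t' => f t' s) t /\ ex_derive (fun s' => f t s') s) /\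
      Ck2 k' (fun t s => Derive (fun t' => f t' s) t) /\
      Ck2 k' (fun t s => Derive (fun s' => f t s') s)
  end.

Definition matder (v1 v2 f : Fld) : Fld :=
  fun t x y => pt f t x y + v1 t x y * px f t x y + v2 t x y * py f t x y.

Definition gradsq (zeta : Fld) : Fld :=
  fun t x y => px zeta t x y ^ 2 + py zeta t x y ^ 2.

Definition varpi (g : R) (v1 v2 what zeta : Fld) : Fld :=
  fun t x y => / 2 * (v1 t x y ^ 2 + v2 t x y ^ 2 + what t x y ^ 2) - g * zeta t x y.

Definition mutil (eps : R) (D rho what zeta : Fld) : Fld :=
  fun t x y => D t x y * rho t x y * what t x y / (1 + eps * gradsq zeta t x y).

(* Components of the one-form  α = v̂·dx + w̃ dζ = α1 dx + α2 dy. *)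
Definition alpha1 (v1 wtil zeta : Fld) : Fld := fun t x y => v1 t x y + wtil t x y * px zeta t x y.
Definition alpha2 (v2 wtil zeta : Fld) : Fld := fun t x y => v2 t x y + wtil t x y * py zeta t x y.

(* Components of  (∂_t + L_v̂) α  for the 1-form α = a1 dx + a2 dy and the
   vector field v̂ = (v1, v2), in Cartesian coordinates:
   (L_v α)_i = v_j ∂_j α_i + α_j ∂_i v_j   (= (i_v dα + d(i_v α))_i). *)
Definition lieT1 (v1 v2 a1 a2 : Fld) : Fld :=
  fun t x y => pt a1 t x y + v1 t x y * px a1 t x y + v2 t x y * py a1 t x y
             + a1 t x y * px v1 t x y + a2 t x y * px v2 t x y.
Definition lieT2 (v1 v2 a1 a2 : Fld) : Fld :=
  fun t x y => pt a2 t x y + v1 t x y * px a2 t x y + v2 t x y * py a2 t x y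
             + a1 t x y * py v1 t x y + a2 t x y * py v2 t x y.

Definition loop_int (b1 b2 : Fld) (c1 c2 : R -> R -> R) (t : R) : R :=
  RInt (fun s => b1 t (c1 t s) (c2 t s) * Derive (fun s' => c1 t s') s
               + b2 t (c1 t s) (c2 t s) * Derive (fun s' => c2 t s') s) 0 1.

(* Main.v *)
Require Import Defs.
From Stdlib Require Import Reals Lra.
From Coquelicot Require Import Coquelicot.
Open Scope R_scope.

Lemma cont_pair {U V W : UniformSpace} (A : U -> V) (B : U -> W) z :
  continuous A z -> continuous B z -> continuous (fun z => (A z, B z)) z.
Proof.
  intros HA HB.
  apply (continuous_comp_2 A B (fun a b => (a, b))); auto.
  apply (continuous_ext (fun x => x)). { intros [a b]; reflexivity. }
  apply continuous_id.
Qed.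

Lemma cont3_comp {U : UniformSpace} (f : Fld) (A B C : U -> R) z :
  cont3 f -> continuous A z -> continuous B z -> continuous C z ->
  continuous (fun z => f (A z) (B z) (C z)) z.
Proof.
  intros Hf HA HB HC.
  apply (continuous_comp (fun z => ((A z, B z), C z))
    (fun q : R*R*R => f (fst (fst q)) (snd (fst q)) (snd q))).
  - apply cont_pair; auto. apply cont_pair; auto.
  - apply Hf.
Qed.

Lemma cont2_comp {U : UniformSpace} (f : R -> R -> R) (A B : U -> R) z :
  cont2 f -> continuous A z -> continuous B z ->
  continuous (fun z => f (A z) (B z)) z.
Proof.
  intros Hf HA HB.
  apply (continuous_comp (fun z => (A z, B z))
    (fun q : R*R => f (fst q) (snd q))).
  - apply cont_pair; auto.
  - apply Hf.
Qed.

Lemma chain2 (a : Fld) (t : R) (X Y : R -> R) (z dX dY : R) :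
  (forall x y, ex_derive (fun x' => a t x' y) x /\ ex_derive (fun y' => a t x y') y) ->
  cont3 (px a) ->
  is_derive X z dX -> is_derive Y z dY ->
  is_derive (fun w => a t (X w) (Y w)) z
    (px a t (X z) (Y z) * dX + py a t (X z) (Y z) * dY).
Proof.
  intros Hd Hc HX HY.
  apply is_derive_Reals.
  apply derivable_pt_lim_comp_2d; [ | apply is_derive_Reals; exact HX | apply is_derive_Reals; exact HY ].
  apply filterdiff_differentiable_pt_lim.
  eapply filterdiff_ext_lin.
  - apply (is_derive_filterdiff (a t) (X z) (Y z) (fun x y => px a t x y)).
    + apply filter_forall. intros [x y]. cbn [fst snd]. apply Derive_correct. exact (proj1 (Hd x y)).
    + apply Derive_correct. exact (proj2 (Hd (X z) (Y z))).
    + apply (cont3_comp (px a) (fun _ => t) fst snd).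
      * exact Hc.
      * apply continuous_const.
      * apply continuous_fst.
      * apply continuous_snd.
  - intros [u v]. cbn [fst snd]. reflexivity.
Qed.

Lemma chain3 (a : Fld) (X Y : R -> R) (t dX dY : R) :
  (forall t x y, ex_derive (fun t' => a t' x y) t /\ ex_derive (fun x' => a t x' y) x /\
                 ex_derive (fun y' => a t x y') y) ->
  cont3 (pt a) -> cont3 (px a) ->
  is_derive X t dX -> is_derive Y t dY ->
  is_derive (fun w => a w (X w) (Y w)) t
    (pt a t (X t) (Y t) + px a t (X t) (Y t) * dX + py a t (X t) (Y t) * dY).
Proof.
  intros Hd Hct Hcx HX HY.
  pose (G := fun u w => a u (X w) (Y w)).
  pose (dG := fun u w => pt a u (X w) (Y w)).
  pose (dy := px a t (X t) (Y t) * dX + py a t (X t) (Y t) * dY).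
  assert (H1 : filterdiff (fun u : R * R => G (fst u) (snd u)) (locally (t, t))
       (fun u : R * R => plus (scal (fst u) (dG t t)) (scal (snd u) dy))).
  { apply (is_derive_filterdiff G t t dG dy).
    + apply filter_forall. intros [u w]. cbn [fst snd]. unfold G, dG. apply Derive_correct. exact (proj1 (Hd u (X w) (Y w))).
    + unfold G, dy. apply chain2; [ intros x y; exact (proj2 (Hd t x y)) | exact Hcx | exact HX | exact HY ].
    + unfold dG. apply (cont3_comp (pt a) fst (fun z => X (snd z)) (fun z => Y (snd z))).
        * exact Hct.
        * apply continuous_fst.
        * apply (continuous_comp snd X). apply continuous_snd.
          cbn [snd]. apply (ex_derive_continuous (K := R_AbsRing) (V := R_NormedModule) X t). exists dX; exact HX.
        * apply (continuous_comp snd Y). apply continuous_snd.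
          cbn [snd]. apply (ex_derive_continuous (K := R_AbsRing) (V := R_NormedModule) Y t). exists dY; exact HY. }
  assert (HG : differentiable_pt_lim G t t (dG t t) dy).
  { apply filterdiff_differentiable_pt_lim.
    eapply filterdiff_ext_lin. exact H1.
    intros [u v]. cbn [fst snd]. unfold plus, scal; simpl. unfold mult; simpl. reflexivity. }
  apply is_derive_Reals.
  pose proof (derivable_pt_lim_comp_2d G (fun x => x) (fun x => x)
     t _ _ 1 1 HG (derivable_pt_lim_id t) (derivable_pt_lim_id t)) as H.
  replace (pt a t (X t) (Y t) + px a t (X t) (Y t) * dX + py a t (X t) (Y t) * dY)
    with (dG t t * 1 + dy * 1) by (unfold dG, dy; ring).
  exact H.
Qed.

Lemma cont3_ext (f g : Fld) : (forall t x y, f t x y = g t x y) -> cont3 f -> cont3 g.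
Proof.
  intros E Hf q. apply (continuous_ext (fun q : R*R*R => f (fst (fst q)) (snd (fst q)) (snd q))).
  - intros; apply E.
  - apply Hf.
Qed.

Lemma cont3_plus (f g : Fld) : cont3 f -> cont3 g -> cont3 (fun t x y => f t x y + g t x y).
Proof.
  intros Hf Hg q.
  apply (continuous_plus (fun q : R*R*R => f (fst (fst q)) (snd (fst q)) (snd q))
                         (fun q : R*R*R => g (fst (fst q)) (snd (fst q)) (snd q))); auto.
Qed.

Lemma cont3_mult (f g : Fld) : cont3 f -> cont3 g -> cont3 (fun t x y => f t x y * g t x y).
Proof.
  intros Hf Hg q.
  apply (continuous_mult (fun q : R*R*R => f (fst (fst q)) (snd (fst q)) (snd q))
                         (fun q : R*R*R => g (fst (fst q)) (snd (fst q)) (snd q))); auto.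
Qed.

Definition C1f (f : Fld) : Prop :=
  cont3 f /\
  (forall t x y, ex_derive (fun t' => f t' x y) t /\ ex_derive (fun x' => f t x' y) x /\
                 ex_derive (fun y' => f t x y') y) /\
  cont3 (pt f) /\ cont3 (px f) /\ cont3 (py f).

Lemma Ck3_C1 f : Ck3 2 f -> C1f f.
Proof.
  intros [H0 [H1 [[H2 _] [[H3 _] [H4 _]]]]]. exact (conj H0 (conj H1 (conj H2 (conj H3 H4)))).
Qed.

Lemma Ck3_C1_px f : Ck3 2 f -> C1f (px f).
Proof.
  intros [_ [_ [_ [[H3 [H5 [H6 [H7 H8]]]] _]]]]. exact (conj H3 (conj H5 (conj H6 (conj H7 H8)))).
Qed.

Lemma Ck3_C1_py f : Ck3 2 f -> C1f (py f).
Proof.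
  intros [_ [_ [_ [_ [H3 [H5 [H6 [H7 H8]]]]]]]]. exact (conj H3 (conj H5 (conj H6 (conj H7 H8)))).
Qed.

Lemma C1_plus f g : C1f f -> C1f g -> C1f (fun t x y => f t x y + g t x y).
Proof.
  intros [F0 [F1 [F2 [F3 F4]]]] [G0 [G1 [G2 [G3 G4]]]].
  split; [exact (cont3_plus f g F0 G0)|].
  split.
  { intros t x y; destruct (F1 t x y) as [A [B C]]; destruct (G1 t x y) as [A' [B' C']].
    split; [|split].
    - exact (ex_derive_plus (fun t' => f t' x y) (fun t' => g t' x y) t A A').
    - exact (ex_derive_plus (fun t' => f t t' y) (fun t' => g t t' y) x B B').
    - exact (ex_derive_plus (fun t' => f t x t') (fun t' => g t x t') y C C'). }
  split; [|split].
  - apply (cont3_ext (fun t x y => pt f t x y + pt g t x y)); [|exact (cont3_plus _ _ F2 G2)].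
    intros t x y; destruct (F1 t x y) as [A [B C]]; destruct (G1 t x y) as [A' [B' C']].
    unfold pt. symmetry. exact (Derive_plus (fun t' => f t' x y) (fun t' => g t' x y) t A A').
  - apply (cont3_ext (fun t x y => px f t x y + px g t x y)); [|exact (cont3_plus _ _ F3 G3)].
    intros t x y; destruct (F1 t x y) as [A [B C]]; destruct (G1 t x y) as [A' [B' C']].
    unfold px. symmetry. exact (Derive_plus (fun t' => f t t' y) (fun t' => g t t' y) x B B').
  - apply (cont3_ext (fun t x y => py f t x y + py g t x y)); [|exact (cont3_plus _ _ F4 G4)].
    intros t x y; destruct (F1 t x y) as [A [B C]]; destruct (G1 t x y) as [A' [B' C']].
    unfold py. symmetry. exact (Derive_plus (fun t' => f t x t') (fun t' => g t x t') y C C').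
Qed.

Lemma C1_mult f g : C1f f -> C1f g -> C1f (fun t x y => f t x y * g t x y).
Proof.
  intros [F0 [F1 [F2 [F3 F4]]]] [G0 [G1 [G2 [G3 G4]]]].
  split; [exact (cont3_mult f g F0 G0)|].
  split.
  { intros t x y; destruct (F1 t x y) as [A [B C]]; destruct (G1 t x y) as [A' [B' C']].
    split; [|split].
    - exact (ex_derive_mult (fun t' => f t' x y) (fun t' => g t' x y) t A A').
    - exact (ex_derive_mult (fun t' => f t t' y) (fun t' => g t t' y) x B B').
    - exact (ex_derive_mult (fun t' => f t x t') (fun t' => g t x t') y C C'). }
  split; [|split].
  - apply (cont3_ext (fun t x y => pt f t x y * g t x y + f t x y * pt g t x y));
      [|exact (cont3_plus _ _ (cont3_mult _ _ F2 G0) (cont3_mult _ _ F0 G2))].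
    intros t x y; destruct (F1 t x y) as [A [B C]]; destruct (G1 t x y) as [A' [B' C']].
    unfold pt. symmetry. exact (Derive_mult (fun t' => f t' x y) (fun t' => g t' x y) t A A').
  - apply (cont3_ext (fun t x y => px f t x y * g t x y + f t x y * px g t x y));
      [|exact (cont3_plus _ _ (cont3_mult _ _ F3 G0) (cont3_mult _ _ F0 G3))].
    intros t x y; destruct (F1 t x y) as [A [B C]]; destruct (G1 t x y) as [A' [B' C']].
    unfold px. symmetry. exact (Derive_mult (fun t' => f t t' y) (fun t' => g t t' y) x B B').
  - apply (cont3_ext (fun t x y => py f t x y * g t x y + f t x y * py g t x y));
      [|exact (cont3_plus _ _ (cont3_mult _ _ F4 G0) (cont3_mult _ _ F0 G4))].
    intros t x y; destruct (F1 t x y) as [A [B C]]; destruct (G1 t x y) as [A' [B' C']].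
    unfold py. symmetry. exact (Derive_mult (fun t' => f t x t') (fun t' => g t x t') y C C').
Qed.

Lemma cR_plus {U : UniformSpace} (f g : U -> R) x :
  continuous f x -> continuous g x -> continuous (fun z => f z + g z) x.
Proof. intros A B. exact (continuous_plus f g x A B). Qed.

Lemma cR_mult {U : UniformSpace} (f g : U -> R) x :
  continuous f x -> continuous g x -> continuous (fun z => f z * g z) x.
Proof. intros A B. exact (continuous_mult f g x A B). Qed.

Lemma cont_along (f : Fld) (c1 c2 : R -> R -> R) (z : R * R) :
  cont3 f -> cont2 c1 -> cont2 c2 ->
  continuous (fun z : R * R => f (fst z) (c1 (fst z) (snd z)) (c2 (fst z) (snd z))) z.
Proof.
  intros Hf H1 H2. destruct z as [u v].
  apply (cont3_comp f fst (fun z => c1 (fst z) (snd z)) (fun z => c2 (fst z) (snd z))).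
  - exact Hf.
  - apply continuous_fst.
  - apply (cont2_comp c1 fst snd); [exact H1 | apply continuous_fst | apply continuous_snd].
  - apply (cont2_comp c2 fst snd); [exact H2 | apply continuous_fst | apply continuous_snd].
Qed.

Lemma derive_eq (f : R -> R) x l l' : is_derive f x l -> l = l' -> is_derive f x l'.
Proof. intros H E; rewrite <- E; exact H. Qed.

Theorem mainTheorem5
  (g eps : R) (v1 v2 D rho zeta what wtil p : Fld) (c1 c2 : R -> R -> R)
  (* regularity of the fields and of the moving loop *)
  (Hv1 : Ck3 2 v1) (Hv2 : Ck3 2 v2) (HD : Ck3 2 D) (Hrho : Ck3 2 rho)
  (Hzeta : Ck3 2 zeta) (Hwhat : Ck3 2 what) (Hwtil : Ck3 2 wtil) (Hp : Ck3 2 p)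
  (Hc1 : Ck2 2 c1) (Hc2 : Ck2 2 c2)
  (Hrho_pos : forall t x y, 0 < rho t x y)
  (* w̃ := ŵ / (1 + ε |∇ζ|^2), so that μ̃ = D ρ w̃ *)
  (Hwtil_def : forall t x y, wtil t x y = what t x y / (1 + eps * gradsq zeta t x y))
  (* WCIFS equations *)
  (Hmom1 : forall t x y, lieT1 v1 v2 (alpha1 v1 wtil zeta) (alpha2 v2 wtil zeta) t x y
             = px (varpi g v1 v2 what zeta) t x y - / rho t x y * px p t x y)
  (Hmom2 : forall t x y, lieT2 v1 v2 (alpha1 v1 wtil zeta) (alpha2 v2 wtil zeta) t x y
             = py (varpi g v1 v2 what zeta) t x y - / rho t x y * py p t x y)
  (Hmass : forall t x y, pt D t x y
             + px (fun t x y => D t x y * v1 t x y) t x y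
             + py (fun t x y => D t x y * v2 t x y) t x y = 0)
  (HD1 : forall t x y, D t x y = 1)
  (Hbuoy : forall t x y, matder v1 v2 rho t x y = 0)
  (Helev : forall t x y, matder v1 v2 zeta t x y
             = what t x y * (1 + eps * gradsq zeta t x y))
  (Hvert : forall t x y, matder v1 v2 wtil t x y
             = - g + 2 * eps / (D t x y * rho t x y) *
               (px (fun t x y => what t x y * mutil eps D rho what zeta t x y * px zeta t x y) t x y
              + py (fun t x y => what t x y * mutil eps D rho what zeta t x y * py zeta t x y) t x y))
  (* the loop s ∈ [0,1] ↦ c(t,s) is closed and moves with velocity v̂ *)
  (Hclosed : forall t, c1 t 0 = c1 t 1 /\ c2 t 0 = c2 t 1)
  (Hflow1 : forall t s, is_derive (fun t' => c1 t' s) t (v1 t (c1 t s) (c2 t s)))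
  (Hflow2 : forall t s, is_derive (fun t' => c2 t' s) t (v2 t (c1 t s) (c2 t s))) :
  forall t : R,
    is_derive
      (loop_int
         (fun t x y => v1 t x y + mutil eps D rho what zeta t x y / (D t x y * rho t x y) * px zeta t x y)
         (fun t x y => v2 t x y + mutil eps D rho what zeta t x y / (D t x y * rho t x y) * py zeta t x y)
         c1 c2)
      t
      (loop_int
         (fun t x y => px (varpi g v1 v2 what zeta) t x y - / rho t x y * px p t x y)
         (fun t x y => py (varpi g v1 v2 what zeta) t x y - / rho t x y * py p t x y)
         c1 c2 t).
Proof.
  intros t0.
  assert (Ca1 : C1f (alpha1 v1 wtil zeta)).
  { exact (C1_plus _ _ (Ck3_C1 _ Hv1) (C1_mult _ _ (Ck3_C1 _ Hwtil) (Ck3_C1_px _ Hzeta))). }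
  assert (Ca2 : C1f (alpha2 v2 wtil zeta)).
  { exact (C1_plus _ _ (Ck3_C1 _ Hv2) (C1_mult _ _ (Ck3_C1 _ Hwtil) (Ck3_C1_py _ Hzeta))). }
  destruct Ca1 as [A10 [A1d [A1t [A1x A1y]]]].
  destruct Ca2 as [A20 [A2d [A2t [A2x A2y]]]].
  destruct (Ck3_C1 _ Hv1) as [V10 [V1d [V1t [V1x V1y]]]].
  destruct (Ck3_C1 _ Hv2) as [V20 [V2d [V2t [V2x V2y]]]].
  destruct Hc1 as [cc1 [dc1 [[cT1 [dT1 [cTT1 cST1]]] [cS1 [dS1 [cTS1 cSS1]]]]]].
  destruct Hc2 as [cc2 [dc2 [[cT2 [dT2 [cTT2 cST2]]] [cS2 [dS2 [cTS2 cSS2]]]]]].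
  pose (F := fun u s =>
    alpha1 v1 wtil zeta u (c1 u s) (c2 u s) * Derive (fun s' => c1 u s') s
  + alpha2 v2 wtil zeta u (c1 u s) (c2 u s) * Derive (fun s' => c2 u s') s).
  pose (DF := fun u s =>
    ((pt (alpha1 v1 wtil zeta) u (c1 u s) (c2 u s)
      + px (alpha1 v1 wtil zeta) u (c1 u s) (c2 u s) * v1 u (c1 u s) (c2 u s)
      + py (alpha1 v1 wtil zeta) u (c1 u s) (c2 u s) * v2 u (c1 u s) (c2 u s))
     * Derive (fun s' => c1 u s') s
     + alpha1 v1 wtil zeta u (c1 u s) (c2 u s) * Derive (fun u' => Derive (fun s' => c1 u' s') s) u)
  + ((pt (alpha2 v2 wtil zeta) u (c1 u s) (c2 u s)
      + px (alpha2 v2 wtil zeta) u (c1 u s) (c2 u s) * v1 u (c1 u s) (c2 u s)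
      + py (alpha2 v2 wtil zeta) u (c1 u s) (c2 u s) * v2 u (c1 u s) (c2 u s))
     * Derive (fun s' => c2 u s') s
     + alpha2 v2 wtil zeta u (c1 u s) (c2 u s) * Derive (fun u' => Derive (fun s' => c2 u' s') s) u)).
  assert (HDF : forall u s, is_derive (fun u' => F u' s) u (DF u s)).
  { intros u s.
    pose proof (chain3 (alpha1 v1 wtil zeta) (fun u => c1 u s) (fun u => c2 u s) u
                  (v1 u (c1 u s) (c2 u s)) (v2 u (c1 u s) (c2 u s)) A1d A1t A1x
                  (Hflow1 u s) (Hflow2 u s)) as E1.
    pose proof (chain3 (alpha2 v2 wtil zeta) (fun u => c1 u s) (fun u => c2 u s) u
                  (v1 u (c1 u s) (c2 u s)) (v2 u (c1 u s) (c2 u s)) A2d A2t A2x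
                  (Hflow1 u s) (Hflow2 u s)) as E2.
    pose proof (Derive_correct _ _ (proj1 (dS1 u s))) as S1d.
    pose proof (Derive_correct _ _ (proj1 (dS2 u s))) as S2d.
    pose proof (is_derive_plus _ _ _ _ _ (is_derive_mult _ _ _ _ _ E1 S1d Rmult_comm)
                  (is_derive_mult _ _ _ _ _ E2 S2d Rmult_comm)) as H.
    exact H. }
  assert (HcDF : forall z, continuous (fun z : R * R => DF (fst z) (snd z)) z).
  { intros z. unfold DF.
    apply cR_plus; [apply cR_plus | apply cR_plus].
    - apply cR_mult; [ | exact (cS1 z)].
      apply cR_plus; [apply cR_plus | apply cR_mult].
      + exact (cont_along _ c1 c2 z A1t cc1 cc2).
      + apply cR_mult; [exact (cont_along _ c1 c2 z A1x cc1 cc2) | exact (cont_along _ c1 c2 z V10 cc1 cc2)].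
      + exact (cont_along _ c1 c2 z A1y cc1 cc2).
      + exact (cont_along _ c1 c2 z V20 cc1 cc2).
    - apply cR_mult; [exact (cont_along _ c1 c2 z A10 cc1 cc2) | exact (cTS1 z)].
    - apply cR_mult; [ | exact (cS2 z)].
      apply cR_plus; [apply cR_plus | apply cR_mult].
      + exact (cont_along _ c1 c2 z A2t cc1 cc2).
      + apply cR_mult; [exact (cont_along _ c1 c2 z A2x cc1 cc2) | exact (cont_along _ c1 c2 z V10 cc1 cc2)].
      + exact (cont_along _ c1 c2 z A2y cc1 cc2).
      + exact (cont_along _ c1 c2 z V20 cc1 cc2).
    - apply cR_mult; [exact (cont_along _ c1 c2 z A20 cc1 cc2) | exact (cTS2 z)]. }
  assert (HcF : forall z, continuous (fun z : R * R => F (fst z) (snd z)) z).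
  { intros z. unfold F.
    apply cR_plus; apply cR_mult.
    - exact (cont_along _ c1 c2 z A10 cc1 cc2).
    - exact (cS1 z).
    - exact (cont_along _ c1 c2 z A20 cc1 cc2).
    - exact (cS2 z). }
  assert (HR : is_derive (fun u => RInt (fun s => F u s) 0 1) t0
                 (RInt (fun s => Derive (fun u => F u s) t0) 0 1)).
  { apply is_derive_RInt_param.
    - apply filter_forall. intros y s _. exists (DF y s). exact (HDF y s).
    - intros s _. apply (continuity_2d_pt_ext DF).
      + intros u v. symmetry. apply is_derive_unique. apply HDF.
      + apply continuity_2d_pt_filterlim. exact (HcDF (t0, s)).
    - apply filter_forall. intros y. apply (ex_RInt_continuous (V := R_CompleteNormedModule)). intros z _.
      exact (continuous_comp (fun s : R => (y, s)) (fun z : R * R => F (fst z) (snd z)) z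
               (cont_pair _ _ z (continuous_const y z) (continuous_id z)) (HcF (y, z))). }
  assert (Hmu : forall t x y, mutil eps D rho what zeta t x y / (D t x y * rho t x y) = wtil t x y).
  { intros t x y. unfold mutil. rewrite HD1, Hwtil_def. unfold Rdiv.
    pose proof (Hrho_pos t x y).
    generalize (/ (1 + eps * gradsq zeta t x y)). intro r. field. lra. }
  assert (T1eq : forall s, Derive (fun u' => Derive (fun s' => c1 u' s') s) t0
     = px v1 t0 (c1 t0 s) (c2 t0 s) * Derive (fun s' => c1 t0 s') s
     + py v1 t0 (c1 t0 s) (c2 t0 s) * Derive (fun s' => c2 t0 s') s).
  { intros s.
    rewrite (Schwarz c1 t0 s).
    - rewrite (Derive_ext (fun z => Derive (fun t => c1 t z) t0) (fun z => v1 t0 (c1 t0 z) (c2 t0 z))).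
      + apply is_derive_unique.
        apply (chain2 v1 t0 (fun z => c1 t0 z) (fun z => c2 t0 z)).
        * intros x y. exact (proj2 (V1d t0 x y)).
        * exact V1x.
        * exact (Derive_correct _ _ (proj2 (dc1 t0 s))).
        * exact (Derive_correct _ _ (proj2 (dc2 t0 s))).
      + intros z. apply is_derive_unique. exact (Hflow1 t0 z).
    - apply locally_2d_forall. intros u v.
      split; [exact (proj1 (dc1 u v)) | split; [exact (proj2 (dc1 u v)) | split]].
      + exact (proj1 (dS1 u v)).
      + exact (proj2 (dT1 u v)).
    - apply continuity_2d_pt_filterlim. exact (cTS1 (t0, s)).
    - apply continuity_2d_pt_filterlim. exact (cST1 (t0, s)). }
  assert (T2eq : forall s, Derive (fun u' => Derive (fun s' => c2 u' s') s) t0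
     = px v2 t0 (c1 t0 s) (c2 t0 s) * Derive (fun s' => c1 t0 s') s
     + py v2 t0 (c1 t0 s) (c2 t0 s) * Derive (fun s' => c2 t0 s') s).
  { intros s.
    rewrite (Schwarz c2 t0 s).
    - rewrite (Derive_ext (fun z => Derive (fun t => c2 t z) t0) (fun z => v2 t0 (c1 t0 z) (c2 t0 z))).
      + apply is_derive_unique.
        apply (chain2 v2 t0 (fun z => c1 t0 z) (fun z => c2 t0 z)).
        * intros x y. exact (proj2 (V2d t0 x y)).
        * exact V2x.
        * exact (Derive_correct _ _ (proj2 (dc1 t0 s))).
        * exact (Derive_correct _ _ (proj2 (dc2 t0 s))).
      + intros z. apply is_derive_unique. exact (Hflow2 t0 z).
    - apply locally_2d_forall. intros u v.
      split; [exact (proj1 (dc2 u v)) | split; [exact (proj2 (dc2 u v)) | split]].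
      + exact (proj1 (dS2 u v)).
      + exact (proj2 (dT2 u v)).
    - apply continuity_2d_pt_filterlim. exact (cTS2 (t0, s)).
    - apply continuity_2d_pt_filterlim. exact (cST2 (t0, s)). }
  eapply is_derive_ext; [ | eapply derive_eq; [exact HR | ] ].
  - intros u. unfold loop_int. apply RInt_ext. intros s _. unfold F, alpha1, alpha2.
    rewrite !Hmu. reflexivity.
  - unfold loop_int. apply RInt_ext. intros s _.
    match goal with |- ?a = ?b => change (@eq R a b) end.
    transitivity (DF t0 s); [ apply is_derive_unique; apply HDF | ]. unfold DF.
    rewrite T1eq, T2eq, <- Hmom1, <- Hmom2. unfold lieT1, lieT2. ring.
Qed.
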